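(* Let $\rho$ be a representation of $D^{2,2,2}$, let $\{i,j,k\}=\{1,2,3\}$, and let $n\ge1$. Then: 1. $\varphi_i(\Phi^+\rho(a^{ij}_n))=\rho(y_iA^{kj}_n)$; 2. $\varphi_j(\Phi^+\rho(a^{ij}_n))=\rho(y_jA^{kj}_n)$ for $n>1$, and $\varphi_j(\Phi^+\rho(a^{ij}_1))=\rho(y_j(y_i+y_k)A^{kj}_1)$; 3. $\varphi_k(\Phi^+\rho(y_ia^{ij}_n))=\rho(y_kA^{ji}_{n+1})$; 4. $\varphi_i(\Phi^+\rho(A^{ij}_n))=\rho(y_i(y_j+y_k)a^{ik}_n)$; 5. $\varphi_j(\Phi^+\rho(y_kA^{ij}_n))=\rho(y_j(x_k+y_i)a^{ik}_n)$; 6. $\varphi_k(\Phi^+\rho(y_jA^{ij}_n))=\rho(y_ka^{ji}_{n+1})$.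
   Context: $D^{2,2,2}$ is the modular lattice generated by $x_1,y_1,x_2,y_2,x_3,y_3$ subject only to $x_i\subseteq y_i$ ($i=1,2,3$), with a greatest element $I$ adjoined. Meet is written $ab$, join $a+b$. Atomic elements: for distinct $i,j$, let $k$ denote the third index. Define - $a^{ij}_0=I$ and $a^{ij}_n=x_i+y_ja^{jk}_{n-1}$ for $n\ge1$; - $A^{ij}_0=I$ and $A^{ij}_n=y_i+x_jA^{ki}_{n-1}$ for $n\ge1$. A representation $\rho$ of $D^{2,2,2}$ in a finite-dimensional vector space $X_0$ is a lattice morphism from $D^{2,2,2}$ to the subspace lattice of $X_0$, with $\rho(I)=X_0$. Write $X_i=\rho(x_i)\subseteq Y_i=\rho(y_i)$. Put $R=Y_1\oplus Y_2\oplus Y_3$ and $X^1_0=\{(\eta_1,\eta_2,\eta_3)\in R:\sum\eta_i=0\}$. Let $G'_i\subseteq R$ be the triples with $i$-th coordinate in $X_i$, and $H'_i\subseteq R$ the triples with $i$-th coordinate $0$. $\Phi^+\rho$ is the representation in $X^1_0$ with $\Phi^+\rho(y_i)=G'_i\cap X^1_0$, $\Phi^+\rho(x_i)=H'_i\cap X^1_0$, $\Phi^+\rho(I)=X^1_0$. The elementary map $\varphi_i:X^1_0\to X_0$ is $(\eta_1,\eta_2,\eta_3)\mapsto\eta_i$; $\varphi_i(S)$ denotes the image of a subspace $S$. *)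

(* Defs.v *)
From HB Require Import structures.
From mathcomp Require Import all_boot all_order all_algebra.
Set Implicit Arguments.
Unset Strict Implicit.
Unset Printing Implicit Defensive.
Import GRing.Theory.
Local Open Scope ring_scope.

(* Lattice terms over the generators x_1,x_2,x_3,y_1,y_2,y_3 and the
   adjoined top element I of D^{2,2,2}.  Indices 1,2,3 are 'I_3 = {0,1,2}. *)
Inductive term : Type :=
  | Tx of 'I_3
  | Ty of 'I_3
  | Ttop
  | Tmeet of term & term
  | Tjoin of term & term.

(* the third index k of {i,j,k} = {1,2,3}, for distinct i j *)
Definition third (i j : 'I_3) : 'I_3 := inord (3 - i - j).

Fixpoint a_ (i j : 'I_3) (n : nat) : term :=
  match n with
  | 0 => Ttop
  | m.+1 => Tjoin (Tx i) (Tmeet (Ty j) (a_ j (third i j) m))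
  end.

Fixpoint A_ (i j : 'I_3) (n : nat) : term :=
  match n with
  | 0 => Ttop
  | m.+1 => Tjoin (Ty i) (Tmeet (Tx j) (A_ (third i j) i m))
  end.

Fixpoint eval (K : fieldType) (W : vectType K) (top : {vspace W})
  (gx gy : 'I_3 -> {vspace W}) (t : term) : {vspace W} :=
  match t with
  | Tx i => gx i
  | Ty i => gy i
  | Ttop => top
  | Tmeet a b => (eval top gx gy a :&: eval top gx gy b)%VS
  | Tjoin a b => (eval top gx gy a + eval top gx gy b)%VS
  end.

(* A representation rho of D^{2,2,2} in V (X_0 = V), determined by
   X_i = rho(x_i) <= Y_i = rho(y_i). *)
Definition rho (K : fieldType) (V : vectType K) (X Y : 'I_3 -> {vspace V})
  (t : term) : {vspace V} := eval fullv X Y t.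

Notation triple V := {ffun 'I_3 -> V}.

Definition coord (K : fieldType) (V : vectType K) (i : 'I_3) :
  'Hom(triple V, V) := linfun (fun eta : triple V => eta i).

Definition sum3 (K : fieldType) (V : vectType K) : 'Hom(triple V, V) :=
  linfun (fun eta : triple V => \sum_(i < 3) eta i).

Definition Rsp (K : fieldType) (V : vectType K) (Y : 'I_3 -> {vspace V}) :
  {vspace triple V} := (\bigcap_(i < 3) (coord V i @^-1: Y i))%VS.

Definition X10 (K : fieldType) (V : vectType K) (Y : 'I_3 -> {vspace V}) :
  {vspace triple V} := (Rsp Y :&: lker (sum3 V))%VS.

Definition G' (K : fieldType) (V : vectType K) (X Y : 'I_3 -> {vspace V})
  (i : 'I_3) : {vspace triple V} := (Rsp Y :&: (coord V i @^-1: X i))%VS.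
Definition H' (K : fieldType) (V : vectType K) (Y : 'I_3 -> {vspace V})
  (i : 'I_3) : {vspace triple V} := (Rsp Y :&: lker (coord V i))%VS.

Definition PhiPlus (K : fieldType) (V : vectType K) (X Y : 'I_3 -> {vspace V})
  (t : term) : {vspace triple V} :=
  eval (X10 Y) (fun i => H' Y i :&: X10 Y)%VS (fun i => G' X Y i :&: X10 Y)%VS t.

Definition phi (K : fieldType) (V : vectType K) (i : 'I_3)
  (S : {vspace triple V}) : {vspace V} := (coord V i @: S)%VS.

(* Main.v *)
Require Import Defs.
From HB Require Import structures.
From mathcomp Require Import all_boot all_order all_algebra.
Set Implicit Arguments. Unset Strict Implicit. Unset Printing Implicit Defensive.
Import GRing.Theory.
Local Open Scope ring_scope.

Section Lin.
Variables (K : fieldType) (V : vectType K).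
Definition evf (i : 'I_3) (e : triple V) : V := e i.
Fact evf_lin i : linear (evf i).
Proof. by move=> a x y; rewrite /evf !ffunE. Qed.
HB.instance Definition _ i := GRing.isLinear.Build K (triple V) V _ (evf i) (evf_lin i).
Definition s3f (e : triple V) : V := \sum_(i < 3) e i.
Fact s3f_lin : linear s3f.
Proof. move=> a x y; rewrite /s3f scaler_sumr -big_split /=; apply: eq_bigr => l _; by rewrite !ffunE. Qed.
HB.instance Definition _ := GRing.isLinear.Build K (triple V) V _ s3f s3f_lin.

Lemma coordE (i : 'I_3) (e : triple V) : Defs.coord V i e = e i.
Proof. by rewrite /Defs.coord (lfunE (evf i)). Qed.

Lemma sum3E (e : triple V) : sum3 V e = e ord0 + e (inord 1) + e (inord 2).
Proof. rewrite /sum3 (lfunE s3f) /=. rewrite /s3f. rewrite (big_ord_recr 2) (big_ord_recr 1) (big_ord_recr 0) big_ord0 /= add0r.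
 congr (_ + _ + _); apply: congr1; apply: val_inj => //=; by rewrite inordK. Qed.
End Lin.
Definition o0 : 'I_3 := @Ordinal 3 0 isT.
Definition o1 : 'I_3 := @Ordinal 3 1 isT.
Definition o2 : 'I_3 := @Ordinal 3 2 isT.
Lemma I3P (l : 'I_3) : [\/ l = o0, l = o1 | l = o2].
Proof. by case: l => [[|[|[|//]]] p]; [constructor 1|constructor 2|constructor 3]; apply: val_inj. Qed.

Ltac perm3 := first [ reflexivity | by rewrite addrAC | by rewrite (addrC (_ o0)) 
  | by rewrite (addrC (_ o1)) | by rewrite (addrC (_ o2))
  | by rewrite -addrA addrC | by rewrite addrC addrA
  | by rewrite addrC (addrC (_ o0)) addrA | by rewrite addrC (addrC (_ o1)) addrA | by rewrite addrC (addrC (_ o2)) addrA ].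

Section Lin2.
Variables (K : fieldType) (V : vectType K).
Lemma sum3D (e : triple V) i j k : i != j -> j != k -> i != k ->
  sum3 V e = e i + e j + e k.
Proof.
rewrite sum3E.
have -> : (inord 1 : 'I_3) = o1 by apply: val_inj; rewrite /= inordK.
have -> : (inord 2 : 'I_3) = o2 by apply: val_inj; rewrite /= inordK.
have -> : (ord0 : 'I_3) = o0 by apply: val_inj.
by case: (I3P i) => ->; case: (I3P j) => ->; case: (I3P k) => -> //= _ _ _; perm3.
Qed.
End Lin2.
Lemma cover3 (i j k l : 'I_3) : i != j -> j != k -> i != k -> [\/ l = i, l = j | l = k].
Proof.
by case: (I3P i) => ->; case: (I3P j) => ->; case: (I3P k) => ->; case: (I3P l) => -> //= _ _ _;
  by [constructor 1 | constructor 2 | constructor 3].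
Qed.

Lemma third_ok (i j k : 'I_3) : i != j -> j != k -> i != k -> third i j = k.
Proof.
by case: (I3P i) => ->; case: (I3P j) => ->; case: (I3P k) => -> //= _ _ _;
  apply: val_inj; rewrite /third /= inordK.
Qed.

Section Core.
Variables (K : fieldType) (V : vectType K) (X Y : 'I_3 -> {vspace V}).
Hypothesis XY : forall l, (X l <= Y l)%VS.

Lemma addfE (u v : triple V) l : (u + v) l = u l + v l.
Proof. by rewrite !ffunE. Qed.
Lemma oppfE (u : triple V) l : (- u) l = - u l.
Proof. by rewrite !ffunE. Qed.

Lemma memRsp (e : triple V) : (e \in Rsp Y) = [forall l, e l \in Y l].
Proof.
rewrite /Rsp (big_ord_recr 2) (big_ord_recr 1) (big_ord_recr 0) big_ord0 /=.
rewrite !memv_cap memvf /= -!memv_preim !coordE.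

have E0 : widen_ord (leqnSn 2) (widen_ord (leqnSn 1) ord_max) = o0 :> 'I_3 by apply: val_inj.
have E1 : widen_ord (leqnSn 2) ord_max = o1 :> 'I_3 by apply: val_inj.
have E2 : ord_max = o2 :> 'I_3 by apply: val_inj.
rewrite E0 E1 E2.
apply/idP/forallP => [/andP[/andP[h0 h1] h2] l | h]; last by rewrite !h.
by case: (I3P l) => ->.
Qed.

Section Dist.
Variables (i j k : 'I_3).
Hypotheses (hij : i != j) (hjk : j != k) (hik : i != k).

Lemma memX10 (e : triple V) : (e \in X10 Y) =
  [&& e i \in Y i, e j \in Y j, e k \in Y k & e i + e j + e k == 0].
Proof.
rewrite /X10 memv_cap memRsp memv_ker (sum3D _ hij hjk hik).
apply/andP/and4P => [[/forallP h ->] | [h1 h2 h3 ->]]; first by rewrite !h.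
split=> //; apply/forallP => l.
by case: (cover3 l hij hjk hik) => ->.
Qed.
End Dist.

Definition Pre (i : 'I_3) (P : {vspace V}) : {vspace triple V} :=
  (X10 Y :&: (Defs.coord V i @^-1: P))%VS.

Lemma memPre i P (e : triple V) : (e \in Pre i P) = (e \in X10 Y) && (e i \in P).
Proof. by rewrite /Pre memv_cap -memv_preim coordE. Qed.

Lemma memHX i (e : triple V) : (e \in (H' Y i :&: X10 Y)%VS) = (e \in Pre i 0%VS).
Proof.
rewrite memPre /H' !memv_cap memv_ker coordE memv0.
by case: (e \in Rsp Y); case: (e i == 0); case: (e \in lker _).
Qed.

Lemma memGX i (e : triple V) : (e \in (G' X Y i :&: X10 Y)%VS) = (e \in Pre i (X i)).
Proof.
rewrite memPre /G' !memv_cap -memv_preim coordE.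
by case: (e \in Rsp Y); case: (e i \in X i); case: (e \in lker _).
Qed.

Lemma Pre_full i : Pre i fullv = X10 Y.
Proof. by apply/vspaceP => e; rewrite memPre memvf andbT. Qed.

Definition mk (i j : 'I_3) (u v w : V) : triple V :=
  [ffun l => if l == i then u else if l == j then v else w].
Lemma mk_i i j u v w : mk i j u v w i = u.
Proof. by rewrite ffunE eqxx. Qed.
Lemma mk_j i j u v w : i != j -> mk i j u v w j = v.
Proof. by move=> h; rewrite ffunE eq_sym (negbTE h) eqxx. Qed.
Lemma mk_k i j k u v w : i != k -> j != k -> mk i j u v w k = w.
Proof. by move=> h1 h2; rewrite ffunE eq_sym (negbTE h1) eq_sym (negbTE h2). Qed.

Lemma sol3 (a b c : V) : a + b + c = 0 -> a = - c + - b.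
Proof. by move=> h; rewrite -[a](addrK b) -[a + b](addrK c) h sub0r. Qed.

Section Dist2.
Variables (i j k : 'I_3).
Hypotheses (hij : i != j) (hjk : j != k) (hik : i != k).
Let hji : j != i. Proof. by rewrite eq_sym. Qed.
Let hkj : k != j. Proof. by rewrite eq_sym. Qed.
Let hki : k != i. Proof. by rewrite eq_sym. Qed.

Lemma stepa Q : ((H' Y i :&: X10 Y) + ((G' X Y j :&: X10 Y) :&: Pre j Q))%VS
   = Pre i (Y k + X j :&: Q)%VS.
Proof.
apply/vspaceP => e; apply/idP/idP.
  case/memv_addP => u Hu [v Hv ->].
  move: Hu; rewrite memHX memPre memv0 => /andP[Hu /eqP Hu0].
  move: Hv; rewrite memv_cap memGX !memPre => /andP[/andP[Hv HvX] /andP[_ HvQ]].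
  rewrite (memvD Hu Hv) /= addfE Hu0 add0r.
  move: (Hv); rewrite (memX10 hij hjk hik) => /and4P[_ Hvj Hvk /eqP /sol3 ->].
  by apply: memv_add; rewrite memvN // memv_cap HvX.
rewrite memPre => /andP[He /memv_addP[p Hp [q Hq Eei]]].
move: (Hq); rewrite memv_cap => /andP[HqX HqQ].
set z := mk i j (e i) (- q) (- p).
have Hz : z \in X10 Y.
  rewrite (memX10 hij hjk hik) /z mk_i (mk_j _ _ _ hij) (mk_k _ _ _ hik hjk) !memvN Hp.
  rewrite (subvP (XY j)) //.
  move: He; rewrite (memX10 hij hjk hik) => /and4P[-> _ _ _] /=.
  by rewrite Eei addrK subrr eqxx.
rewrite -(subrK z e); apply: memv_add.
  rewrite memHX memPre (memvB He Hz) /= addfE oppfE /z mk_i subrr memv0 //.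
rewrite memv_cap memGX !memPre Hz /z (mk_j _ _ _ hij) !memvN HqX HqQ //.
Qed.

Lemma stepA Q : ((G' X Y i :&: X10 Y) + ((H' Y j :&: X10 Y) :&: Pre k Q))%VS
   = Pre i (X i + Y k :&: Q)%VS.
Proof.
apply/vspaceP => e; apply/idP/idP.
  case/memv_addP => u Hu [v Hv ->].
  move: Hu; rewrite memGX memPre => /andP[Hu HuX].
  move: Hv; rewrite memv_cap memHX !memPre memv0 => /andP[/andP[Hv /eqP Hv0] /andP[_ HvQ]].
  rewrite (memvD Hu Hv) /= addfE.
  move: (Hv); rewrite (memX10 hij hjk hik) => /and4P[_ Hvj Hvk /eqP /sol3 ->].
  by rewrite Hv0 oppr0 addr0; apply: memv_add; rewrite // memv_cap memvN Hvk memvN.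
rewrite memPre => /andP[He /memv_addP[x Hx [q Hq Eei]]].
move: (Hq); rewrite memv_cap => /andP[HqY HqQ].
move: (He); rewrite (memX10 hij hjk hik) => /and4P[Hei _ _ _].
have HqYi : q \in Y i.
  have -> : q = e i - x by rewrite Eei addrC addKr.
  by rewrite memvB // (subvP (XY i)).
set z := mk i j q 0 (- q).
have Hz : z \in X10 Y.
  rewrite (memX10 hij hjk hik) /z mk_i (mk_j _ _ _ hij) (mk_k _ _ _ hik hjk) memvN HqY HqYi mem0v /=.
  by rewrite addr0 subrr eqxx.
rewrite -(subrK z e); apply: memv_add.
  rewrite memGX memPre (memvB He Hz) /= addfE oppfE /z mk_i Eei addrK //.
rewrite memv_cap memHX !memPre Hz /z (mk_j _ _ _ hij) (mk_k _ _ _ hik hjk) memvN HqQ memv0 eqxx //.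
Qed.

Lemma ImOther P : phi j (Pre i P) = (Y j :&: (Y i :&: P + Y k))%VS.
Proof.
apply/vspaceP => w; apply/idP/idP.
  case/memv_imgP => e He ->; rewrite coordE.
  move: He; rewrite memPre => /andP[He HeP].
  move: (He); rewrite (memX10 hij hjk hik) => /and4P[Hi Hj Hk /eqP Hs].
  have Ej : e j = - e i + - e k.
    by apply: (sol3 (c := e i)); rewrite addrC addrA.
  by rewrite memv_cap Hj /= Ej; apply: memv_add; rewrite memvN // memv_cap Hi.
rewrite memv_cap => /andP[Hw /memv_addP[p Hp [y Hy Ew]]].
move: Hp; rewrite memv_cap => /andP[HpY HpP].
apply/memv_imgP; exists (mk i j (- p) w (- y)); last by rewrite coordE (mk_j _ _ _ hij).
rewrite memPre mk_i memvN HpP andbT (memX10 hij hjk hik) mk_i (mk_j _ _ _ hij) (mk_k _ _ _ hik hjk).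
by rewrite !memvN HpY Hw Hy Ew addrA addNr add0r subrr eqxx.
Qed.

Lemma ImSame P : phi i (Pre i P) = (Y i :&: (Y j + Y k) :&: P)%VS.
Proof.
apply/vspaceP => w; apply/idP/idP.
  case/memv_imgP => e He ->; rewrite coordE.
  move: He; rewrite memPre => /andP[He HeP].
  move: (He); rewrite (memX10 hij hjk hik) => /and4P[Hi Hj Hk /eqP /sol3 Ei].
  rewrite !memv_cap Hi HeP andbT /= Ei addrC.
  by apply: memv_add; rewrite memvN.
rewrite !memv_cap => /andP[/andP[Hw /memv_addP[a Ha [b Hb Ew]]] HwP].
apply/memv_imgP; exists (mk i j w (- a) (- b)); last by rewrite coordE mk_i.
rewrite memPre mk_i HwP andbT (memX10 hij hjk hik) mk_i (mk_j _ _ _ hij) (mk_k _ _ _ hik hjk).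
by rewrite !memvN Hw Ha Hb Ew (addrC a b) addrK subrr eqxx.
Qed.

Lemma ImG P : phi j ((G' X Y k :&: X10 Y) :&: Pre i P) = (Y j :&: (Y i :&: P + X k))%VS.
Proof.
apply/vspaceP => w; apply/idP/idP.
  case/memv_imgP => e He ->; rewrite coordE.
  rewrite memv_cap memGX !memPre in He; case/andP: He => [/andP[He HeX] /andP[_ HeP]].
  move: (He); rewrite (memX10 hij hjk hik) => /and4P[Hi Hj Hk /eqP Hs].
  have Ej : e j = - e i + - e k.
    by apply: (sol3 (c := e i)); rewrite addrC addrA.
  by rewrite memv_cap Hj /= Ej; apply: memv_add; rewrite memvN // memv_cap Hi.
rewrite memv_cap => /andP[Hw /memv_addP[p Hp [y Hy Ew]]].
move: Hp; rewrite memv_cap => /andP[HpY HpP].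
apply/memv_imgP; exists (mk i j (- p) w (- y)); last by rewrite coordE (mk_j _ _ _ hij).
rewrite memv_cap memGX !memPre mk_i (mk_k _ _ _ hik hjk) !memvN HpP Hy andbT.
rewrite (memX10 hij hjk hik) mk_i (mk_j _ _ _ hij) (mk_k _ _ _ hik hjk).
by rewrite !memvN HpY Hw (subvP (XY k)) // Ew addrA addNr add0r subrr eqxx.
Qed.
End Dist2.

Lemma meetG c P : ((G' X Y c :&: X10 Y) :&: Pre c P)%VS = Pre c (X c :&: P)%VS.
Proof.
apply/vspaceP => e; rewrite memv_cap memGX !memPre memv_cap.
by case: (e \in X10 Y); case: (e c \in X c).
Qed.
End Core.

Lemma a_S i j n : a_ i j n.+1 = Tjoin (Tx i) (Tmeet (Ty j) (a_ j (third i j) n)). Proof. by []. Qed.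
Lemma A_S i j n : A_ i j n.+1 = Tjoin (Ty i) (Tmeet (Tx j) (A_ (third i j) i n)). Proof. by []. Qed.

Section Main.
Variables (K : fieldType) (V : vectType K) (X Y : 'I_3 -> {vspace V}).
Hypothesis XY : forall l, (X l <= Y l)%VS.

Lemma PJ a b : PhiPlus X Y (Tjoin a b) = (PhiPlus X Y a + PhiPlus X Y b)%VS. Proof. by []. Qed.
Lemma PM a b : PhiPlus X Y (Tmeet a b) = (PhiPlus X Y a :&: PhiPlus X Y b)%VS. Proof. by []. Qed.
Lemma PX l : PhiPlus X Y (Tx l) = (H' Y l :&: X10 Y)%VS. Proof. by []. Qed.
Lemma PY l : PhiPlus X Y (Ty l) = (G' X Y l :&: X10 Y)%VS. Proof. by []. Qed.
Lemma PT : PhiPlus X Y Ttop = X10 Y. Proof. by []. Qed.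
Lemma RJ a b : rho X Y (Tjoin a b) = (rho X Y a + rho X Y b)%VS. Proof. by []. Qed.
Lemma RM a b : rho X Y (Tmeet a b) = (rho X Y a :&: rho X Y b)%VS. Proof. by []. Qed.
Lemma RX l : rho X Y (Tx l) = X l. Proof. by []. Qed.
Lemma RY l : rho X Y (Ty l) = Y l. Proof. by []. Qed.
Lemma RT : rho X Y Ttop = fullv. Proof. by []. Qed.

Lemma IA n : forall i j k, i != j -> j != k -> i != k ->
  PhiPlus X Y (a_ i j n) = Pre Y i (rho X Y (A_ k j n)).
Proof.
elim: n => [|n IH] i j k hij hjk hik; first by rewrite /= PT RT Pre_full.
have hji : j != i by rewrite eq_sym.
have hki : k != i by rewrite eq_sym.
have hkj : k != j by rewrite eq_sym.
rewrite a_S A_S (third_ok hij hjk hik) (third_ok hkj hji hki) PJ PM PX PY (IH j k i hjk hki hji).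
by rewrite (stepa XY hij hjk hik) RJ RM RX RY.
Qed.

Lemma IB n : forall i j k, i != j -> j != k -> i != k ->
  PhiPlus X Y (A_ i j n) = Pre Y i (rho X Y (a_ i k n)).
Proof.
elim: n => [|n IH] i j k hij hjk hik; first by rewrite /= PT RT Pre_full.
have hji : j != i by rewrite eq_sym.
have hki : k != i by rewrite eq_sym.
have hkj : k != j by rewrite eq_sym.
rewrite a_S A_S (third_ok hij hjk hik) (third_ok hik hkj hij) PJ PM PX PY (IH k i j hki hij hkj).
by rewrite (stepA XY hij hjk hik) RJ RM RX RY.
Qed.
End Main.

Unset Implicit Arguments.
Local Close Scope ring_scope.

Theorem mainTheorem10 (K : fieldType) (V : vectType K)
  (X Y : 'I_3 -> {vspace V}) (XY : forall l, (X l <= Y l)%VS)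
  (i j k : 'I_3) (hij : i != j) (hjk : j != k) (hik : i != k)
  (n : nat) (hn : (1 <= n)%N) :
  (phi i (PhiPlus X Y (a_ i j n)) = rho X Y (Tmeet (Ty i) (A_ k j n)) /\
      (((1 < n)%N -> phi j (PhiPlus X Y (a_ i j n)) = rho X Y (Tmeet (Ty j) (A_ k j n)))
      /\ phi j (PhiPlus X Y (a_ i j 1)) =
         rho X Y (Tmeet (Tmeet (Ty j) (Tjoin (Ty i) (Ty k))) (A_ k j 1))) /\
      phi k (PhiPlus X Y (Tmeet (Ty i) (a_ i j n))) = rho X Y (Tmeet (Ty k) (A_ j i n.+1)) /\
      phi i (PhiPlus X Y (A_ i j n)) =
        rho X Y (Tmeet (Tmeet (Ty i) (Tjoin (Ty j) (Ty k))) (a_ i k n)) /\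
      phi j (PhiPlus X Y (Tmeet (Ty k) (A_ i j n))) =
        rho X Y (Tmeet (Tmeet (Ty j) (Tjoin (Tx k) (Ty i))) (a_ i k n)) /\
      phi k (PhiPlus X Y (Tmeet (Ty j) (A_ i j n))) = rho X Y (Tmeet (Ty k) (a_ j i n.+1))).
Proof.
have hji : j != i by rewrite eq_sym.
have hki : k != i by rewrite eq_sym.
have hkj : k != j by rewrite eq_sym.
case: n hn => [//|m] _.
have AYjk : forall m', (rho X Y (A_ k j m'.+1) <= Y j + Y k)%VS.
  move=> m'; rewrite A_S RJ RM RY RX subv_add addvSr /=.
  exact: subv_trans (capvSl _ _) (subv_trans (XY j) (addvSl _ _)).
have AYik : forall m', (rho X Y (A_ k j m'.+2) <= Y i + Y k)%VS.
  move=> m'; rewrite A_S RJ RM RY RX subv_add addvSr /= (third_ok hkj hji hki).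
  apply: subv_trans (capvSr _ _) _.
  rewrite RJ RM RY RX subv_add addvSl /=.
  exact: subv_trans (capvSl _ _) (subv_trans (XY k) (addvSr _ _)).
have YkA : forall m', (Y k <= rho X Y (A_ k j m'.+1))%VS.
  by move=> m'; rewrite A_S RJ addvSl.
have Xka : forall m', (X k <= rho X Y (a_ i k m'.+1))%VS.
  move=> m'; rewrite a_S RJ RM RY RX (third_ok hik hkj hij).
  apply: subv_trans (addvSr _ _); rewrite subv_cap XY /=.
  by case: m' => [|m'']; rewrite ?subvf // a_S RJ RX addvSl.
have Ej : forall m', phi j (PhiPlus X Y (a_ i j m'.+1)) =
    (Y j :&: (rho X Y (A_ k j m'.+1) :&: (Y i + Y k)))%VS.
  move=> m'; rewrite (IA XY _ hij hjk hik) (ImOther Y hij hjk hik) (capvC (Y i)).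
  by rewrite vspace_modr // YkA.
split; [|split; [split|split; [|split; [|split]]]].
- rewrite (IA XY _ hij hjk hik) (ImSame Y hij hjk hik) RM RY -capvA.
  by rewrite (capv_idPr (AYjk m)).
- case: m => [//|m'] _; rewrite Ej RM RY.
  by rewrite (capv_idPl (AYik m')).
- by rewrite Ej !RM RJ !RY -capvA (capvC (Y i + Y k)%VS).
- rewrite PM PY (IA XY _ hij hjk hik) meetG (ImOther Y hik hkj hij).
  rewrite RM RY (A_S j i) RJ RM RY RX (third_ok hji hik hjk).
  by rewrite capvA (capv_idPr (XY i)) addvC.
- by rewrite (IB XY _ hij hjk hik) (ImSame Y hij hjk hik) !RM RJ !RY.
- rewrite PM PY (IB XY _ hij hjk hik) (ImG XY hij hjk hik) !RM RJ RY RX.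
  rewrite (capvC (Y i)) vspace_modr ?Xka //.
  by rewrite -capvA (capvC (rho X Y _)) addvC.
- rewrite PM PY (IB XY _ hij hjk hik) (ImG XY hik hkj hij) RM RY (a_S j i) RJ RM RX RY.
  by rewrite (third_ok hji hik hjk) addvC.
Qed.
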